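(* Let $f$, $g$, $\xi$, $F$ satisfy the standing assumptions below, and let $x$ be the unique continuous solution of $x'(t)=-f(x(t))+g(t)$, $t>0$, $x(0)=\xi$. Suppose that \[ \lim_{t\to\infty}\frac{g(t)}{f(F^{-1}(t))}=+\infty, \] that $f\in\mathrm{RV}_0(\beta)$ for some $\beta>1$, that $g\in\mathrm{RV}_\infty(-\theta)$ for some $\theta\ge0$, and that $x(t)\to0$ as $t\to\infty$. (i) If $\theta>0$, then $\lim_{t\to\infty}f(x(t))/g(t)=1$. (ii) If $\theta=0$ and there is a decreasing function $\gamma_1$ with $\lim_{t\to\infty}g(t)/\gamma_1(t)=1$, then $\lim_{t\to\infty}f(x(t))/g(t)=1$.
   Context: Standing assumptions: $f\in C(\mathbb{R};\mathbb{R})$ is locally Lipschitz continuous on $\mathbb{R}$, $f(0)=0$ and $xf(x)>0$ for $x\neq0$; $g\in C([0,\infty);\mathbb{R})$ with $g(t)>0$ for $t>0$; $\xi>0$. $F(x)=\int_x^1 \frac{du}{f(u)}$ for $x>0$, with $\lim_{x\to0^+}F(x)=+\infty$; $F^{-1}$ is the inverse of the strictly decreasing function $F$. $\mathrm{RV}_0(\beta)$: measurable positive $\varphi$ on $(0,\infty)$ with $\varphi(\lambda x)/\varphi(x)\to\lambda^\beta$ as $x\to0^+$ for every $\lambda>0$. $\mathrm{RV}_\infty(\alpha)$: measurable positive $h$ with $h(\lambda t)/h(t)\to\lambda^\alpha$ as $t\to\infty$ for every $\lambda>0$. *)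

(* Defs.v *)
From Stdlib Require Import Reals.
Open Scope R_scope.

Definition locally_lipschitz (f : R -> R) : Prop :=
  forall a b : R, exists L : R, 0 <= L /\
    forall x y : R, a <= x <= b -> a <= y <= b -> Rabs (f x - f y) <= L * Rabs (x - y).

Definition continuous_on_nonneg (g : R -> R) : Prop :=
  forall t : R, 0 <= t -> limit1_in g (fun u => 0 <= u) (g t) t.

Definition lim_infty (h : R -> R) (l : R) : Prop :=
  forall eps : R, eps > 0 -> exists T : R, forall t : R, t > T -> Rabs (h t - l) < eps.

Definition lim_infty_pinf (h : R -> R) : Prop :=
  forall M : R, exists T : R, forall t : R, t > T -> h t > M.

Definition lim_0plus (h : R -> R) (l : R) : Prop :=
  forall eps : R, eps > 0 -> exists d : R, d > 0 /\
    forall x : R, 0 < x < d -> Rabs (h x - l) < eps.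

Definition lim_0plus_pinf (h : R -> R) : Prop :=
  forall M : R, exists d : R, d > 0 /\ forall x : R, 0 < x < d -> h x > M.

Definition RV0 (phi : R -> R) (beta : R) : Prop :=
  (forall x : R, x > 0 -> phi x > 0) /\
  forall lam : R, lam > 0 ->
    lim_0plus (fun x => phi (lam * x) / phi x) (Rpower lam beta).

Definition RVinf (h : R -> R) (alpha : R) : Prop :=
  (forall t : R, t > 0 -> h t > 0) /\
  forall lam : R, lam > 0 ->
    lim_infty (fun t => h (lam * t) / h t) (Rpower lam alpha).

(* Main.v *)
Require Import Defs.
From Stdlib Require Import Reals Lra Classical ClassicalEpsilon ZArith.
Open Scope R_scope.


Definition ct (h : R -> R) (s : R) : Prop :=
  forall e, e > 0 -> exists d, d > 0 /\ forall u, Rabs (u - s) < d -> Rabs (h u - h s) < e.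

Lemma ct_of_cpt : forall h s, continuity_pt h s -> ct h s.
Proof.
  intros h s H e He. destruct (H e He) as [d [Hd Hu]]. exists d; split; auto.
  intros u Hus. destruct (Req_dec s u) as [E|E].
  - subst. rewrite Rminus_diag, Rabs_R0. lra.
  - apply (Hu u). split. split; [exact I | exact E]. exact Hus.
Qed.

Lemma cpt_of_dlim : forall h s l, derivable_pt_lim h s l -> continuity_pt h s.
Proof. intros h s l H. apply derivable_continuous_pt. exists l. exact H. Qed.

Lemma abs_le_b : forall x r, Rabs x <= r -> -r <= x <= r.
Proof. intros x r H. unfold Rabs in H. destruct (Rcase_abs x); lra. Qed.
Lemma abs_lt_b : forall x r, Rabs x < r -> -r < x < r.
Proof. intros x r H. unfold Rabs in H. destruct (Rcase_abs x); lra. Qed.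
Lemma abs_le_i : forall x r, -r <= x <= r -> Rabs x <= r.
Proof. intros x r H. unfold Rabs. destruct (Rcase_abs x); lra. Qed.
Lemma abs_lt_i : forall x r, -r < x < r -> Rabs x < r.
Proof. intros x r H. unfold Rabs. destruct (Rcase_abs x); lra. Qed.

Definition bstep (P : nat -> R -> Prop) (n : nat) (pq : R * R) : R * R :=
  epsilon (inhabits (0,0)) (fun pq' => fst pq <= fst pq' /\ fst pq' < snd pq' /\ snd pq' <= snd pq /\
     forall m, fst pq' <= m <= snd pq' -> ~ P n m).

Fixpoint bseq (P : nat -> R -> Prop) (a b : R) (n : nat) : R * R :=
  match n with O => (a, b) | S k => bstep P k (bseq P a b k) end.

Lemma baire (a b : R) (P : nat -> R -> Prop) :
  a < b ->
  (forall n l, a <= l <= b -> ~ P n l -> exists d, d > 0 /\ forall m, Rabs (m - l) < d -> ~ P n m) ->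
  (forall l, a <= l <= b -> exists n, P n l) ->
  exists n c r, r > 0 /\ a <= c - r /\ c + r <= b /\ forall m, Rabs (m - c) <= r -> P n m.
Proof.
  intros Hab Hcl Hcov. apply NNPP; intro H.
  assert (Hstep : forall n p q, a <= p -> p < q -> q <= b ->
     exists p' q', p <= p' /\ p' < q' /\ q' <= q /\ forall m, p' <= m <= q' -> ~ P n m).
  { intros n p q Hp Hpq Hq.
    set (c := (p+q)/2). set (r := (q-p)/4).
    assert (Hn : ~ (forall m, Rabs (m - c) <= r -> P n m)).
    { intro Hall. apply H. exists n, c, r. unfold c, r. split; [lra|split;[lra|split;[lra|]]]. exact Hall. }
    apply not_all_ex_not in Hn. destruct Hn as [m Hm].
    apply imply_to_and in Hm. destruct Hm as [Hm1 Hm2].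
    apply abs_le_b in Hm1.
    destruct (Hcl n m) as [d [Hd Hdm]]. unfold c, r in *; lra. exact Hm2.
    set (w := Rmin (d/2) r).
    assert (Hw1 : w <= d/2) by apply Rmin_l. assert (Hw2 : w <= r) by apply Rmin_r.
    assert (Hw3 : w > 0). { unfold w, Rmin. destruct (Rle_dec (d/2) r); unfold r; lra. }
    exists (m - w), (m + w). unfold c, r in *. split; [lra|split;[lra|split;[lra|]]].
    intros m' Hm'. apply Hdm. apply abs_lt_i; lra. }
  set (S0 := bseq P a b).
  assert (Hinv : forall n, a <= fst (S0 n) /\ fst (S0 n) < snd (S0 n) /\ snd (S0 n) <= b /\
     fst (S0 n) <= fst (S0 (S n)) /\ snd (S0 (S n)) <= snd (S0 n) /\
     forall m, fst (S0 (S n)) <= m <= snd (S0 (S n)) -> ~ P n m).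
  { induction n as [|n IH].
    - simpl. destruct (Hstep O a b) as [p' [q' Hpq]]; try lra.
      pose proof (epsilon_spec (inhabits (0,0)) (fun pq' => fst (a,b) <= fst pq' /\ fst pq' < snd pq' /\ snd pq' <= snd (a,b) /\
     forall m, fst pq' <= m <= snd pq' -> ~ P O m)) as E.
      simpl in E. destruct E as [E1 [E2 [E3 E4]]]. exists (p',q'); simpl; exact Hpq.
      unfold S0; simpl; unfold bstep; simpl. repeat split; try lra. exact E4.
    - destruct IH as [I1 [I2 [I3 [I4 [I5 I6]]]]].
      assert (J : a <= fst (S0 (S n)) /\ fst (S0 (S n)) < snd (S0 (S n)) /\ snd (S0 (S n)) <= b).
      { assert (K : fst (S0 (S n)) < snd (S0 (S n))).
        { unfold S0; simpl. unfold bstep.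
          pose proof (epsilon_spec (inhabits (0,0)) (fun pq' => fst (bseq P a b n) <= fst pq' /\ fst pq' < snd pq' /\ snd pq' <= snd (bseq P a b n) /\
            forall m, fst pq' <= m <= snd pq' -> ~ P n m)) as E.
          destruct E as [E1 [E2 [E3 E4]]].
          destruct (Hstep n (fst (S0 n)) (snd (S0 n))) as [p' [q' Hpq]]; try lra.
          exists (p',q'); simpl; exact Hpq. exact E2. }
        lra. }
      destruct J as [J1 [J2 J3]].
      destruct (Hstep (S n) (fst (S0 (S n))) (snd (S0 (S n)))) as [p' [q' Hpq]]; try lra.
      pose proof (epsilon_spec (inhabits (0,0)) (fun pq' => fst (S0 (S n)) <= fst pq' /\ fst pq' < snd pq' /\ snd pq' <= snd (S0 (S n)) /\
            forall m, fst pq' <= m <= snd pq' -> ~ P (S n) m)) as E.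
      destruct E as [E1 [E2 [E3 E4]]]. exists (p',q'); simpl; exact Hpq.
      change (S0 (S (S n))) with (bstep P (S n) (S0 (S n))).
      unfold bstep. repeat split; try lra. exact E4. }
  assert (Hmono : forall n k, (n <= k)%nat -> fst (S0 n) <= fst (S0 k) /\ snd (S0 k) <= snd (S0 n)).
  { intros n k Hnk. induction Hnk. lra. destruct (Hinv m) as [_ [_ [_ [A1 [A2 _]]]]]. lra. }
  assert (Hfs : forall n k, fst (S0 n) <= snd (S0 k)).
  { intros n k. destruct (Nat.le_ge_cases n k) as [L|L].
    - destruct (Hmono n k L). destruct (Hinv k) as [_ [A _]]. lra.
    - destruct (Hmono k n L). destruct (Hinv n) as [_ [A _]]. lra. }
  destruct (completeness (fun y => exists n, y = fst (S0 n))) as [l [Hl1 Hl2]].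
  { exists b. intros y [n ->]. destruct (Hinv n) as [_ [A [B _]]]. lra. }
  { exists (fst (S0 O)). exists O. reflexivity. }
  assert (Hl3 : forall n, fst (S0 n) <= l) by (intro n; apply Hl1; exists n; reflexivity).
  assert (Hl4 : forall k, l <= snd (S0 k)).
  { intro k. apply Hl2. intros y [n ->]. apply Hfs. }
  destruct (Hcov l) as [n Hn].
  { split. pose proof (Hl3 O). simpl in H0. lra. pose proof (Hl4 O). simpl in H0. lra. }
  destruct (Hinv n) as [_ [_ [_ [_ [_ A]]]]]. apply (A l). split; auto. exact Hn.
Qed.


Lemma rpow_cpt : forall b m, 0 < m -> continuity_pt (fun x => Rpower x b) m.
Proof. intros b m Hm. eapply cpt_of_dlim. apply derivable_pt_lim_power. exact Hm. Qed.

Lemma ratio_cpt : forall (phi : R -> R) b u l, 0 < u -> 0 < l -> phi u <> 0 ->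
  (forall v, v > 0 -> continuity_pt phi v) ->
  continuity_pt (fun m => phi (m * u) / phi u - Rpower m b) l.
Proof.
  intros phi b u l Hu Hl Hne Hc.
  assert (C1 : continuity_pt (fun m => phi (m*u)) l).
  { apply (continuity_pt_comp (fun m => m*u) phi l).
    - apply (continuity_pt_mult (fun m => m) (fun _ => u)).
      apply derivable_continuous_pt, derivable_pt_id.
      apply continuity_pt_const. intros ? ?; reflexivity.
    - apply Hc. apply Rmult_lt_0_compat; lra. }
  assert (C2 : continuity_pt (fun m => phi (m*u) / phi u) l).
  { apply (continuity_pt_div (fun m => phi (m*u)) (fun _ => phi u)); auto.
    apply continuity_pt_const. intros ? ?; reflexivity. }
  apply (continuity_pt_minus (fun m => phi (m*u) / phi u) (fun m => Rpower m b)); auto.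
  apply rpow_cpt; auto.
Qed.

Lemma uct_A (phi : R -> R) (b : R) :
  (forall u, u > 0 -> phi u > 0) ->
  (forall u, u > 0 -> continuity_pt phi u) ->
  (forall l, l > 0 -> lim_0plus (fun u => phi (l * u) / phi u) (Rpower l b)) ->
  forall e, e > 0 -> exists c r eta, r > 0 /\ 1 <= c - r /\ c + r <= 2 /\ eta > 0 /\
    forall m u, Rabs (m - c) <= r -> 0 < u < eta -> Rabs (phi (m * u) / phi u - Rpower m b) <= e.
Proof.
  intros Hpos Hc Hrv e He.
  destruct (baire 1 2 (fun n m => forall u, 0 < u < / (INR n + 1) -> Rabs (phi (m * u) / phi u - Rpower m b) <= e))
    as [n [c [r [Hr [H1 [H2 H3]]]]]].
  - lra.
  - intros n l Hl Hn. apply not_all_ex_not in Hn. destruct Hn as [u Hu].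
    apply imply_to_and in Hu. destruct Hu as [Hu1 Hu2]. apply Rnot_le_lt in Hu2.
    pose proof (ratio_cpt phi b u l ltac:(lra) ltac:(lra) ltac:(specialize (Hpos u ltac:(lra)); lra) Hc) as C.
    destruct (ct_of_cpt _ _ C (Rabs (phi (l * u) / phi u - Rpower l b) - e) ltac:(lra)) as [d [Hd Hdd]].
    exists d; split; auto. intros m Hm Hall. specialize (Hall u Hu1). specialize (Hdd m Hm).
    pose proof (Rabs_triang_inv (phi (l * u) / phi u - Rpower l b) (phi (m * u) / phi u - Rpower m b)).
    rewrite Rabs_minus_sym in Hdd. lra.
  - intros l Hl. destruct (Hrv l ltac:(lra) e He) as [d [Hd Hdd]].
    destruct (archimed (/ d)) as [Ha _].
    assert (Hz : (0 <= up (/d))%Z).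
    { apply le_IZR. assert (/d > 0) by (apply Rinv_0_lt_compat; lra). simpl. lra. }
    exists (Z.to_nat (up (/d))). intros u Hu. left.
    assert (HI : INR (Z.to_nat (up (/d))) = IZR (up (/d))).
    { rewrite INR_IZR_INZ, Z2Nat.id by exact Hz. reflexivity. }
    rewrite HI in Hu. destruct Hu as [Hu0 Hu1]. apply Hdd. split. lra.
    apply Rlt_le_trans with (/ (IZR (up (/ d)) + 1)); auto.
    rewrite <- (Rinv_inv d) at 2. apply Rlt_le, Rinv_lt_contravar.
    assert (/d > 0) by (apply Rinv_0_lt_compat; lra).
    apply Rmult_lt_0_compat; lra. lra.
  - exists c, r, (/ (INR n + 1)). split; auto. split; auto. split; auto. split.
    apply Rinv_0_lt_compat. pose proof (pos_INR n). lra.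
    intros m u Hm Hu. apply H3; auto.
Qed.


Lemma alg1 : forall N D P C e K, Rabs (N - P*C) <= e -> Rabs (D - C) <= e -> 1 <= C ->
  0 <= e <= 1/2 -> 0 < P <= K -> Rabs (N/D - P) <= 2*(1+K)*e.
Proof.
  intros N D P C e K H1 H2 HC He HP.
  apply abs_le_b in H1. apply abs_le_b in H2.
  assert (HD : D >= 1/2) by lra.
  assert (E : N/D - P = (N - P*D) / D) by (field; lra).
  rewrite E. apply abs_le_i.
  assert (B1 : N - P*D <= (1+K)*e) by nra.
  assert (B2 : -((1+K)*e) <= N - P*D) by nra.
  assert (HDp : D > 0) by lra.
  split.
  - apply (Rmult_le_reg_r D); auto. replace ((N - P*D)/D*D) with (N-P*D) by (field; lra). nra.
  - apply (Rmult_le_reg_r D); auto. replace ((N - P*D)/D*D) with (N-P*D) by (field; lra). nra.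
Qed.

Lemma Rpower_ge1 : forall c b, 1 <= c -> 0 <= b -> 1 <= Rpower c b.
Proof.
  intros c b Hc Hb. replace 1 with (Rpower c 0).
  apply Rle_Rpower; auto. unfold Rpower. rewrite Rmult_0_l. apply exp_0.
Qed.

Lemma Rpower_pos : forall c b, 0 < Rpower c b.
Proof. intros. unfold Rpower. apply exp_pos. Qed.

Lemma uct_B (phi : R -> R) (b : R) :
  b > 0 ->
  (forall u, u > 0 -> phi u > 0) ->
  (forall u, u > 0 -> continuity_pt phi u) ->
  (forall l, l > 0 -> lim_0plus (fun u => phi (l * u) / phi u) (Rpower l b)) ->
  forall eps, eps > 0 -> exists dl eta, dl > 0 /\ dl <= 1/2 /\ eta > 0 /\
    forall m v, Rabs (m - 1) <= dl -> 0 < v < eta -> Rabs (phi (m * v) / phi v - Rpower m b) <= eps.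
Proof.
  intros Hb Hpos Hc Hrv eps Heps.
  set (K := Rpower (3/2) b).
  assert (HK : 0 < K) by apply Rpower_pos.
  set (e := Rmin (1/2) (eps / (2*(1+K)))).
  assert (He1 : e <= 1/2) by apply Rmin_l.
  assert (He2 : e <= eps / (2*(1+K))) by apply Rmin_r.
  assert (He3 : e > 0).
  { unfold e, Rmin. destruct (Rle_dec (1/2) (eps / (2*(1+K)))). lra.
    apply Rdiv_lt_0_compat; lra. }
  destruct (uct_A phi b Hpos Hc Hrv e He3) as [c [r [eta [Hr [H1 [H2 [Heta H3]]]]]]].
  exists (r/c), eta.
  assert (Hc1 : c > 1) by lra.
  split. apply Rdiv_lt_0_compat; lra.
  split. apply (Rmult_le_reg_r c). lra. replace (r/c*c) with r by (field; lra). lra.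
  split; auto.
  intros m v Hm Hv.
  assert (Hrc : r / c <= r).
  { apply (Rmult_le_reg_r c). lra. replace (r/c*c) with r by (field; lra). nra. }
  apply abs_le_b in Hm.
  assert (Hm0 : 0 < m) by lra.
  set (u := v / c).
  assert (Hu : 0 < u < eta).
  { unfold u. split. apply Rdiv_lt_0_compat; lra.
    apply (Rmult_lt_reg_r c). lra. replace (v/c*c) with v by (field; lra). nra. }
  assert (Hcu : c * u = v) by (unfold u; field; lra).
  assert (Hmcu : (m*c) * u = m * v) by (rewrite Rmult_assoc, Hcu; reflexivity).
  assert (HN : Rabs (phi (m * v) / phi u - Rpower (m*c) b) <= e).
  { rewrite <- Hmcu. apply H3; auto. apply abs_le_i.
    assert (r/c*c = r) by (field; lra). nra. }
  assert (HD : Rabs (phi v / phi u - Rpower c b) <= e).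
  { rewrite <- Hcu. apply H3; auto. rewrite Rminus_diag, Rabs_R0. lra. }
  rewrite <- Rpower_mult_distr in HN by lra.
  assert (Hq : phi (m*v) / phi v = (phi (m*v) / phi u) / (phi v / phi u)).
  { assert (phi u > 0) by (apply Hpos; lra). assert (phi v > 0) by (apply Hpos; lra). field; lra. }
  rewrite Hq.
  apply Rle_trans with (2*(1+K)*e).
  - apply alg1 with (Rpower c b); auto. apply Rpower_ge1; lra. lra.
    split. apply Rpower_pos. unfold K. apply Rle_Rpower_l; lra.
  - apply (Rmult_le_reg_r (/ (2*(1+K)))). apply Rinv_0_lt_compat; lra.
    replace (2 * (1 + K) * e * / (2 * (1 + K))) with e by (field; lra). exact He2.
Qed.


Lemma grid : forall N s, s > 0 -> forall l, 1/2 <= l <= 1/2 + INR N * s ->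
  exists j, (j <= N)%nat /\ 1/2 + INR j * s <= l <= 1/2 + INR j * s + s.
Proof.
  induction N as [|N IH]; intros s Hs l Hl.
  - exists O. simpl in *. split; auto. lra.
  - destruct (Rle_dec l (1/2 + INR N * s)) as [L|L].
    + destruct (IH s Hs l) as [j [Hj1 Hj2]]. lra. exists j. split; auto.
    + exists N. split; auto. rewrite S_INR in Hl. lra.
Qed.

Lemma pointwise_fin (phi : R -> R) (b : R) (lam : nat -> R) e :
  e > 0 -> (forall j, lam j > 0) ->
  (forall l, l > 0 -> lim_0plus (fun u => phi (l * u) / phi u) (Rpower l b)) ->
  forall N, exists eta, eta > 0 /\ forall j, (j <= N)%nat -> forall u, 0 < u < eta ->
    Rabs (phi (lam j * u) / phi u - Rpower (lam j) b) <= e.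
Proof.
  intros He Hl Hrv. induction N as [|N IH].
  - destruct (Hrv (lam O) (Hl O) e He) as [d [Hd Hdd]]. exists d. split; auto.
    intros j Hj u Hu. inversion Hj. left. apply Hdd. auto.
  - destruct IH as [e1 [He1 H1]].
    destruct (Hrv (lam (S N)) (Hl (S N)) e He) as [d [Hd Hdd]].
    exists (Rmin e1 d). split. apply Rmin_pos; auto.
    intros j Hj u Hu. pose proof (Rmin_l e1 d). pose proof (Rmin_r e1 d).
    inversion Hj. left. apply Hdd. lra. apply H1. auto. lra.
Qed.

Lemma uct_C (phi : R -> R) (b : R) :
  b > 0 ->
  (forall u, u > 0 -> phi u > 0) ->
  (forall u, u > 0 -> continuity_pt phi u) ->
  (forall l, l > 0 -> lim_0plus (fun u => phi (l * u) / phi u) (Rpower l b)) ->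
  forall eps, eps > 0 -> exists eta, eta > 0 /\
    forall l u, 1/2 <= l <= 1 -> 0 < u < eta -> phi (l * u) <= (1 + eps) * phi u.
Proof.
  intros Hb Hpos Hc Hrv eps Heps.
  set (K := Rpower (3/2) b).
  assert (HK : 0 < K) by apply Rpower_pos.
  set (e := Rmin 1 (eps / (2+K))).
  assert (He1 : e <= 1) by apply Rmin_l.
  assert (He2 : e <= eps / (2+K)) by apply Rmin_r.
  assert (He3 : e > 0).
  { unfold e, Rmin. destruct (Rle_dec 1 (eps / (2+K))). lra.
    apply Rdiv_lt_0_compat; lra. }
  assert (He4 : e * (2 + K) <= eps).
  { apply (Rmult_le_reg_r (/ (2+K))). apply Rinv_0_lt_compat; lra.
    replace (e * (2+K) * /(2+K)) with e by (field; lra). exact He2. }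
  destruct (uct_B phi b Hb Hpos Hc Hrv e He3) as [dl [etaB [Hdl [Hdl2 [HetaB HB]]]]].
  set (s := dl / 4).
  assert (Hs : s > 0) by (unfold s; lra).
  destruct (archimed (1 / s)) as [Ha _].
  set (N := Z.to_nat (up (1/s))).
  assert (HN : INR N * s >= 1/2).
  { assert (Hz : (0 <= up (1/s))%Z).
    { apply le_IZR. assert (1/s > 0) by (apply Rdiv_lt_0_compat; lra). simpl. lra. }
    unfold N. rewrite INR_IZR_INZ, Z2Nat.id by exact Hz.
    assert (IZR (up (1/s)) * s >= 1/s * s) by nra.
    replace (1/s*s) with 1 in H by (field; lra). lra. }
  set (lam := fun j : nat => 1/2 + INR j * s).
  assert (Hlam : forall j, lam j > 0).
  { intro j. unfold lam. pose proof (pos_INR j). nra. }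
  destruct (pointwise_fin phi b lam e He3 Hlam Hrv N) as [etaP [HetaP HP]].
  exists (Rmin etaB etaP). split. apply Rmin_pos; auto.
  intros l u Hl Hu. pose proof (Rmin_l etaB etaP). pose proof (Rmin_r etaB etaP).
  destruct (grid N s Hs l) as [j [Hj Hjl]]. lra.
  fold (lam j) in Hjl.
  assert (Hlj : 1/2 <= lam j) by (unfold lam; pose proof (pos_INR j); nra).
  set (m := l / lam j). set (v := lam j * u).
  assert (Hmv : m * v = l * u) by (unfold m, v; field; lra).
  assert (Hm1 : 1 <= m).
  { unfold m. apply (Rmult_le_reg_r (lam j)). lra. replace (l / lam j * lam j) with l by (field; lra). lra. }
  assert (Hm2 : m <= 1 + dl).
  { unfold m. apply (Rmult_le_reg_r (lam j)). lra. replace (l / lam j * lam j) with l by (field; lra).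
    unfold s in Hjl. nra. }
  assert (Hv : 0 < v < etaB). { unfold v. split. nra. nra. }
  assert (HBm := HB m v ltac:(apply abs_le_i; lra) Hv).
  assert (HPj := HP j Hj u ltac:(lra)).
  fold v in HPj.
  rewrite Hmv in HBm.
  apply abs_le_b in HBm. apply abs_le_b in HPj.
  assert (Hphv : phi v > 0) by (apply Hpos; lra).
  assert (Hphu : phi u > 0) by (apply Hpos; lra).
  assert (A1 : phi (l*u) <= (Rpower m b + e) * phi v).
  { replace (phi (l*u)) with (phi (l*u) / phi v * phi v) by (field; lra). nra. }
  assert (A2 : phi v <= (Rpower (lam j) b + e) * phi u).
  { replace (phi v) with (phi v / phi u * phi u) at 1 by (field; lra). nra. }
  assert (Pm : Rpower m b <= K) by (unfold K; apply Rle_Rpower_l; lra).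
  assert (Pj : Rpower (lam j) b <= 1).
  { replace 1 with (Rpower 1 b). apply Rle_Rpower_l; lra. unfold Rpower. rewrite ln_1, Rmult_0_r. apply exp_0. }
  assert (Pl : Rpower m b * Rpower (lam j) b <= 1).
  { rewrite Rpower_mult_distr by lra. replace (m * lam j) with l by (unfold m; field; lra).
    replace 1 with (Rpower 1 b). apply Rle_Rpower_l; lra. unfold Rpower. rewrite ln_1, Rmult_0_r. apply exp_0. }
  pose proof (Rpower_pos m b). pose proof (Rpower_pos (lam j) b).
  assert (A3 : (Rpower m b + e) * (Rpower (lam j) b + e) <= 1 + eps) by nra.
  assert (A4 : (Rpower m b + e) * phi v <= (Rpower m b + e) * ((Rpower (lam j) b + e) * phi u)).
  { apply Rmult_le_compat_l; lra. }
  nra.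
Qed.


Lemma pow2_ge : forall n, INR n <= 2 ^ n.
Proof.
  induction n. simpl. lra. rewrite S_INR. simpl.
  assert (1 <= 2^n) by (apply pow_R1_Rle; lra). lra.
Qed.

Lemma half_pow_lt1 : forall b, b > 0 -> Rpower (1/2) b < 1.
Proof.
  intros b Hb. unfold Rpower. rewrite <- exp_0. apply exp_increasing.
  assert (ln (1/2) < 0). { rewrite <- ln_1. apply ln_increasing; lra. } rewrite exp_0. nra.
Qed.

Lemma near_mono (phi : R -> R) (b : R) :
  b > 0 ->
  (forall u, u > 0 -> phi u > 0) ->
  (forall u, u > 0 -> continuity_pt phi u) ->
  (forall l, l > 0 -> lim_0plus (fun u => phi (l * u) / phi u) (Rpower l b)) ->
  forall eps, eps > 0 -> exists eta, eta > 0 /\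
    forall v u, 0 < v <= u -> u < eta -> phi v <= (1 + eps) * phi u.
Proof.
  intros Hb Hpos Hc Hrv eps Heps.
  destruct (uct_C phi b Hb Hpos Hc Hrv eps Heps) as [etaC [HetaC HC]].
  pose proof (half_pow_lt1 b Hb) as Hh.
  destruct (Hrv (1/2) ltac:(lra) (1 - Rpower (1/2) b) ltac:(lra)) as [d [Hd Hdd]].
  set (eta := Rmin etaC d).
  assert (He1 : eta <= etaC) by apply Rmin_l. assert (He2 : eta <= d) by apply Rmin_r.
  assert (Heta : eta > 0) by (apply Rmin_pos; auto).
  assert (Hhalf : forall u, 0 < u < eta -> phi (u/2) <= phi u).
  { intros u Hu. specialize (Hdd u ltac:(lra)). apply abs_lt_b in Hdd.
    replace (u/2) with (1/2*u) by field.
    assert (phi u > 0) by (apply Hpos; lra).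
    replace (phi (1/2*u)) with (phi (1/2*u) / phi u * phi u) by (field; lra). nra. }
  assert (HP : forall n u v, 0 < u < eta -> u / 2^n <= v <= u -> phi v <= (1+eps) * phi u).
  { induction n as [|n IH]; intros u v Hu Hv.
    - simpl in Hv. replace v with u by (unfold Rdiv in Hv; rewrite Rinv_1, Rmult_1_r in Hv; lra).
      assert (phi u > 0) by (apply Hpos; lra). nra.
    - assert (H2n : 2^n > 0) by (apply pow_lt; lra).
      destruct (Rle_dec (u/2) v) as [L|L].
      + replace v with ((v/u) * u) by (field; lra). apply HC. 2: lra.
        split. apply (Rmult_le_reg_r u). lra. replace (v/u*u) with v by (field; lra). lra.
        apply (Rmult_le_reg_r u). lra. replace (v/u*u) with v by (field; lra). lra.
      + apply Rle_trans with ((1+eps) * phi (u/2)).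
        * apply IH. lra. split. simpl in Hv. replace (u/2/2^n) with (u/(2*2^n)) by (field; lra). lra. lra.
        * apply Rmult_le_compat_l. lra. apply Hhalf. lra. }
  exists eta. split; auto. intros v u Hv Hu.
  destruct (archimed (u/v)) as [Ha _].
  assert (Hz : (0 <= up (u/v))%Z).
  { apply le_IZR. assert (u/v > 0) by (apply Rdiv_lt_0_compat; lra). simpl. lra. }
  set (n := Z.to_nat (up (u/v))).
  assert (Hn : INR n > u / v) by (unfold n; rewrite INR_IZR_INZ, Z2Nat.id by exact Hz; lra).
  pose proof (pow2_ge n). assert (H2n : 2^n > 0) by (apply pow_lt; lra).
  apply (HP n u v). lra. split; [|lra].
  apply (Rmult_le_reg_r (2^n)). auto. replace (u/2^n*2^n) with u by (field; lra).
  assert (u/v * v = u) by (field; lra). nra.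
Qed.


Lemma last_time (h : R -> R) T0 r : T0 < r -> (forall s, T0 <= s <= r -> ct h s) -> h r < 0 ->
  exists q, T0 <= q < r /\ (h q >= 0 \/ q = T0) /\ forall s, q < s <= r -> h s < 0.
Proof.
  intros Hr Hc Hhr.
  destruct (classic (exists s0, T0 <= s0 <= r /\ h s0 >= 0)) as [[s0 [Hs0 Hs0']]|Hno].
  - destruct (completeness (fun s => T0 <= s <= r /\ h s >= 0)) as [q [Hq1 Hq2]].
    { exists r. intros s [Hs _]. lra. }
    { exists s0. auto. }
    assert (Hq0 : s0 <= q) by (apply Hq1; auto).
    assert (Hqr : q <= r) by (apply Hq2; intros s [Hs _]; lra).
    assert (Hhq : h q >= 0).
    { apply Rnot_lt_ge. intro Hlt.
      destruct (Hc q ltac:(lra) (- h q) ltac:(lra)) as [d [Hd Hdd]].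
      assert (Hub : q - d / 2 >= q).
      { apply Rle_ge, Hq2. intros s [Hs Hhs]. assert (s <= q) by (apply Hq1; auto).
        destruct (Rle_dec s (q - d/2)) as [L|L]; auto.
        exfalso. apply Rnot_le_lt in L. assert (HH : Rabs (s - q) < d) by (apply abs_lt_i; lra). specialize (Hdd s HH). apply abs_lt_b in Hdd. lra. }
      lra. }
    exists q. split. split. lra. destruct (Req_dec q r) as [E|E]; [subst; lra|lra].
    split. left; auto.
    intros s Hs. apply Rnot_le_lt. intro Hs'. assert (s <= q) by (apply Hq1; split; [lra|lra]). lra.
  - exists T0. split. lra. split. right; auto.
    intros s Hs. apply Rnot_le_lt. intro Hs'. apply Hno. exists s. split; lra.
Qed.

Lemma F_decr (f F : R -> R) : (forall u, u > 0 -> f u > 0) ->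
  (forall u, u > 0 -> derivable_pt_lim F u (- / f u)) ->
  forall a b, 0 < a < b -> F b < F a.
Proof.
  intros Hf HF a b Hab.
  destruct (MVT_cor2 F (fun u => - / f u) a b ltac:(lra)) as [c [Hc1 Hc2]].
  { intros c Hc. apply HF. lra. }
  assert (/ f c > 0) by (apply Rinv_0_lt_compat, Hf; lra).
  nra.
Qed.

Lemma Finv_small (f F Finv : R -> R) : (forall u, u > 0 -> f u > 0) ->
  (forall u, u > 0 -> derivable_pt_lim F u (- / f u)) ->
  (forall t, t > 0 -> Finv t > 0 /\ F (Finv t) = t) ->
  forall eta, eta > 0 -> exists T, T >= 0 /\ forall t, t > T -> Finv t < eta.
Proof.
  intros Hf HF Hi eta He. exists (Rmax 0 (F eta)). split. pose proof (Rmax_l 0 (F eta)); lra.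
  intros t Ht. pose proof (Rmax_l 0 (F eta)). pose proof (Rmax_r 0 (F eta)).
  destruct (Hi t ltac:(lra)) as [H1 H2]. apply Rnot_le_lt. intro Hle.
  destruct (Req_dec (Finv t) eta) as [E|E].
  - rewrite E in H2. lra.
  - assert (F (Finv t) < F eta) by (apply (F_decr f F Hf HF); lra). lra.
Qed.

Lemma g_cpt (g : R -> R) : (forall t, 0 <= t -> limit1_in g (fun u => 0 <= u) (g t) t) ->
  forall s, s > 0 -> continuity_pt g s.
Proof.
  intros Hg s Hs eps Heps. destruct (Hg s ltac:(lra) eps Heps) as [a [Ha Haa]].
  exists (Rmin a s). split. apply Rmin_pos; lra.
  intros u [Hu1 Hu2]. apply Haa. simpl in *. unfold R_dist in *.
  pose proof (Rmin_l a s). pose proof (Rmin_r a s).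
  apply abs_lt_b in Hu2. split. lra. apply abs_lt_i. lra.
Qed.

Lemma x_pos (f g x : R -> R) xi : f 0 = 0 -> (forall t, t > 0 -> g t > 0) -> xi > 0 ->
  (forall t, 0 <= t -> limit1_in x (fun u => 0 <= u) (x t) t) -> x 0 = xi ->
  (forall t, t > 0 -> derivable_pt_lim x t (- f (x t) + g t)) ->
  forall t, 0 <= t -> x t > 0.
Proof.
  intros Hf0 Hg Hxi Hc Hx0 Hd t1 Ht1. apply Rnot_le_gt. intro Hneg.
  assert (Ht1p : t1 > 0). { destruct (Req_dec t1 0) as [E|E]. subst. lra. lra. }
  destruct (completeness (fun t => 0 <= t <= t1 /\ forall u, 0 <= u <= t -> x u > 0)) as [s [Hs1 Hs2]].
  { exists t1. intros t [Ht _]. lra. }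
  { exists 0. split. lra. intros u Hu. replace u with 0 by lra. lra. }
  assert (Hs0 : 0 <= s) by (apply Hs1; split; [lra|intros u Hu; replace u with 0 by lra; lra]).
  assert (Hst : s <= t1) by (apply Hs2; intros t [Ht _]; lra).
  assert (Hbelow : forall u, 0 <= u < s -> x u > 0).
  { intros u Hu. apply NNPP. intro Hnu.
    assert (s <= u). { apply Hs2. intros t [Ht Ht']. apply Rnot_lt_le. intro Hlt. apply Hnu. apply Ht'. lra. }
    lra. }
  destruct (Rtotal_order (x s) 0) as [Hlt|[Heq|Hgt]].
  - destruct (Hc s Hs0 (- x s) ltac:(lra)) as [a [Ha Haa]].
    assert (Hsp : s > 0). { destruct (Req_dec s 0) as [E|E]. subst. lra. lra. }
    set (u := Rmax 0 (s - a/2)).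
    assert (u >= 0) by (unfold u; pose proof (Rmax_l 0 (s-a/2)); lra).
    assert (Hus : u < s). { unfold u, Rmax. destruct (Rle_dec 0 (s - a/2)); lra. }
    assert (Hua : s - a/2 <= u) by (apply Rmax_r).
    specialize (Haa u). simpl in Haa. unfold R_dist in Haa.
    assert (Rabs (x u - x s) < - x s). { apply Haa. split. lra. apply abs_lt_i. lra. }
    apply abs_lt_b in H0. pose proof (Hbelow u ltac:(lra)). lra.
  - assert (Hsp : s > 0). { destruct (Req_dec s 0) as [E|E]. subst. lra. lra. }
    specialize (Hd s Hsp (g s) (Hg s Hsp)). destruct Hd as [del Hdel].
    rewrite Heq, Hf0 in Hdel.
    set (h := - Rmin (del/2) (s/2)).
    pose proof (Rmin_l (del/2) (s/2)). pose proof (Rmin_r (del/2) (s/2)).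
    assert (Hdp : del > 0) by apply (cond_pos del).
    assert (Hh : h < 0). { unfold h. assert (Rmin (del/2) (s/2) > 0) by (apply Rmin_pos; lra). lra. }
    assert (Hh0 : h <> 0) by lra.
    assert (Hh1 : Rabs h < del) by (apply abs_lt_i; unfold h; assert (Rmin (del/2) (s/2) > 0) by (apply Rmin_pos; lra); lra).
    specialize (Hdel h Hh0 Hh1).
    apply abs_lt_b in Hdel.
    assert (Hq : (x (s + h) - 0) / h > 0) by lra.
    assert (x (s+h) > 0) by (apply Hbelow; assert (h >= -(s/2)) by (unfold h; lra); lra).
    assert ((x (s + h) - 0) / h < 0).
    { unfold Rdiv. replace (x (s+h) - 0) with (x (s+h)) by ring.
      apply Rmult_pos_neg. lra. apply Rinv_lt_0_compat. lra. }
    lra.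
  - destruct (Hc s Hs0 (x s) Hgt) as [a [Ha Haa]].
    destruct (Req_dec s t1) as [E|E]. { subst. lra. }
    set (s' := Rmin (s + a/2) t1).
 assert (H : s' <= s + a/2) by (unfold s'; apply Rmin_l). assert (H0 : s' <= t1) by (unfold s'; apply Rmin_r).
    assert (Hs' : s < s'). { unfold s', Rmin. destruct (Rle_dec (s+a/2) t1); lra. }
    assert (s' <= s). { apply Hs1. split. lra. intros u Hu.
      destruct (Rlt_dec u s) as [L|L]. apply Hbelow; lra. apply Rnot_lt_le in L.
      specialize (Haa u). simpl in Haa. unfold R_dist in Haa.
      assert (Rabs (x u - x s) < x s). { apply Haa. split. lra. apply abs_lt_i. lra. }
      apply abs_lt_b in H1. lra. }
    lra.
Qed.


Lemma hcont (f g x : R -> R) : continuity f -> (forall s, s > 0 -> continuity_pt g s) ->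
  (forall t, t > 0 -> derivable_pt_lim x t (- f (x t) + g t)) ->
  forall al be s, s > 0 -> ct (fun s => al * g s + be * f (x s)) s.
Proof.
  intros Hf Hg Hx al be s Hs. apply ct_of_cpt.
  apply (continuity_pt_plus (mult_real_fct al g) (mult_real_fct be (comp f x))).
  apply continuity_pt_scal. auto.
  apply continuity_pt_scal. apply continuity_pt_comp. eapply cpt_of_dlim. apply Hx; auto. apply Hf.
Qed.

Lemma lower_bound (f g x : R -> R) :
  continuity f -> (forall u, u > 0 -> f u > 0) -> (forall t, t > 0 -> g t > 0) ->
  (forall s, s > 0 -> continuity_pt g s) -> (forall t, 0 <= t -> x t > 0) ->
  (forall t, t > 0 -> derivable_pt_lim x t (- f (x t) + g t)) ->
  lim_infty x 0 ->
  (forall eps, eps > 0 -> exists eta, eta > 0 /\ forall v u, 0 < v <= u -> u < eta -> f v <= (1 + eps) * f u) ->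
  (forall eps, eps > 0 -> exists T, forall t s, T < t <= s -> g s <= (1 + eps) * g t) ->
  forall e, 0 < e <= 1/2 -> exists T, forall r, r > T -> (1 - e/2) * g r <= f (x r).
Proof.
  intros Hfc Hfp Hgp Hgc Hxp Hxd Hxl NMf NMg e He.
  destruct (NMf (e/16) ltac:(lra)) as [etaf [Hetaf Hnmf]].
  destruct (NMg (e/16) ltac:(lra)) as [Tg Hnmg].
  destruct (Hxl etaf Hetaf) as [Tx HTx].
  set (T0 := Rmax (Rmax Tg Tx) 0 + 1).
  assert (HT0 : T0 > Tg /\ T0 > Tx /\ T0 > 0).
  { unfold T0. pose proof (Rmax_l (Rmax Tg Tx) 0). pose proof (Rmax_r (Rmax Tg Tx) 0).
    pose proof (Rmax_l Tg Tx). pose proof (Rmax_r Tg Tx). lra. }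
  assert (HxT0 : x T0 > 0) by (apply Hxp; lra).
  destruct (Hxl (x T0) HxT0) as [R0 HR0].
  exists (Rmax T0 R0). intros r Hr. pose proof (Rmax_l T0 R0). pose proof (Rmax_r T0 R0).
  apply Rnot_lt_le. intro Hlt.
  set (h := fun s => (- (1 - e/4)) * g s + 1 * f (x s)).
  assert (Hgr : g r > 0) by (apply Hgp; lra).
  assert (Hhr : h r < 0) by (unfold h; cbv beta; nra).
  destruct (last_time h T0 r ltac:(lra)) as [q [Hq1 [Hq2 Hq3]]]; auto.
  { intros s Hs. apply hcont; auto. lra. }
  destruct (MVT_cor2 x (fun s => - f (x s) + g s) q r ltac:(lra)) as [c [Hc1 Hc2]].
  { intros c Hc. apply Hxd. lra. }
  assert (Hhc := Hq3 c ltac:(lra)). unfold h in Hhc; cbv beta in Hhc.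
  assert (Hgc0 : g c > 0) by (apply Hgp; lra).
  assert (Hxr : x q < x r). { assert (- f (x c) + g c > 0) by nra. assert ((- f (x c) + g c) * (r - q) > 0) by (apply Rmult_lt_0_compat; lra). lra. }
  assert (Hxr' : Rabs (x r - 0) < x T0) by (apply HR0; lra).
  assert (Hxr2 : Rabs (x r - 0) < etaf) by (apply HTx; lra).
  rewrite Rminus_0_r in Hxr', Hxr2. apply abs_lt_b in Hxr'. apply abs_lt_b in Hxr2.
  destruct Hq2 as [Hq2|Hq2].
  - unfold h in Hq2; cbv beta in Hq2.
    assert (Hxq : x q > 0) by (apply Hxp; lra).
    assert (A1 := Hnmf (x q) (x r) ltac:(lra) ltac:(lra)).
    assert (A2 := Hnmg q r ltac:(lra)).
    assert (Hgq : g q > 0) by (apply Hgp; lra).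
    assert (B : (1 - e/4) * g q <= (1 + e/16) * ((1 + e/16) * (1 - e/2)) * g q) by nra.
    assert ((1 + e/16) * ((1 + e/16) * (1 - e/2)) < 1 - e/4) by nra.
    nra.
  - subst q. lra.
Qed.


Lemma poly1 : forall e, 0 < e <= 1/2 ->
  (1 + e/16) * (1 + e/16) * (1 + e/8) < (1 + e/2) * (1 - e/8).
Proof. intros e He. nra. Qed.

Lemma upper_bound (f g x F Finv : R -> R) (theta : R) :
  continuity f -> (forall u, u > 0 -> f u > 0) -> (forall t, t > 0 -> g t > 0) ->
  (forall s, s > 0 -> continuity_pt g s) -> (forall t, 0 <= t -> x t > 0) ->
  (forall t, t > 0 -> derivable_pt_lim x t (- f (x t) + g t)) ->
  lim_infty x 0 ->
  F 1 = 0 ->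
  (forall u, u > 0 -> derivable_pt_lim F u (- / f u)) ->
  (forall t, t > 0 -> Finv t > 0 /\ F (Finv t) = t) ->
  lim_infty_pinf (fun t => g t / f (Finv t)) ->
  theta >= 0 ->
  (forall l, l > 0 -> lim_infty (fun t => g (l * t) / g t) (Rpower l (- theta))) ->
  (forall eps, eps > 0 -> exists eta, eta > 0 /\ forall v u, 0 < v <= u -> u < eta -> f v <= (1 + eps) * f u) ->
  (forall eps, eps > 0 -> exists T, forall t s, T < t <= s -> g s <= (1 + eps) * g t) ->
  forall e, 0 < e <= 1/2 -> exists T, forall r, r > T -> f (x r) <= (1 + e/2) * g r.
Proof.
  intros Hfc Hfp Hgp Hgc Hxp Hxd Hxl HF1 HFd HFi Hgr Hth Hrv NMf NMg e He.
  set (a := e/8). set (c0 := a / (1 + a)).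
  assert (Hc0 : c0 > 0) by (unfold c0, a; apply Rdiv_lt_0_compat; lra).
  set (s0 := e / (16 * (theta + 1))).
  assert (Hs0 : s0 > 0) by (unfold s0; apply Rdiv_lt_0_compat; lra).
  set (Lm := exp s0).
  assert (HLm : Lm > 1). { unfold Lm. pose proof (exp_ineq1 s0 ltac:(lra)). lra. }
  assert (HRL : Rpower Lm (- theta) >= 1 - e/16).
  { unfold Rpower, Lm. rewrite ln_exp. pose proof (exp_ineq1_le (- theta * s0)).
    assert (theta * s0 <= e/16).
    { unfold s0. apply (Rmult_le_reg_r (16 * (theta + 1))). lra.
      replace (theta * (e / (16 * (theta + 1))) * (16 * (theta + 1))) with (theta * e) by (field; lra). nra. }
    lra. }
  assert (HiL : 0 < / Lm < 1).
  { split. apply Rinv_0_lt_compat; lra. rewrite <- Rinv_1. apply Rinv_lt_contravar; lra. }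
  set (ka := c0 * (1 - / Lm)).
  assert (Hka : ka > 0) by (unfold ka; apply Rmult_lt_0_compat; lra).
  set (K := Rpower ka (- theta) + 1).
  assert (HK : K > 0) by (unfold K; pose proof (Rpower_pos ka (-theta)); lra).
  set (M := 4 * K).
  destruct (NMf (e/16) ltac:(lra)) as [etaf [Hetaf Hnmf]].
  destruct (NMg (e/16) ltac:(lra)) as [Tg Hnmg].
  destruct (Hrv Lm ltac:(lra) (e/16) ltac:(lra)) as [TL HTL].
  destruct (Hrv ka Hka 1 ltac:(lra)) as [Tk HTk].
  destruct (Hgr M) as [TM HTM].
  destruct (Finv_small f F Finv Hfp HFd HFi etaf Hetaf) as [TF [HTF0 HTF]].
  destruct (Hxl (Rmin etaf 1) ltac:(apply Rmin_pos; lra)) as [Tx HTx].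
  pose proof (Rmin_l etaf 1). pose proof (Rmin_r etaf 1).
  set (T0 := Rmax (Rmax Tg TL) (Rmax Tx 0) + 1).
  assert (HT0 : T0 > Tg /\ T0 > TL /\ T0 > Tx /\ T0 > 0).
  { unfold T0. pose proof (Rmax_l (Rmax Tg TL) (Rmax Tx 0)). pose proof (Rmax_r (Rmax Tg TL) (Rmax Tx 0)).
    pose proof (Rmax_l Tg TL). pose proof (Rmax_r Tg TL). pose proof (Rmax_l Tx 0). pose proof (Rmax_r Tx 0). lra. }
  exists (Rmax (Rmax (Lm * T0) Tk) (Rmax (TM / ka) (TF / ka))).
  intros r Hr.
  pose proof (Rmax_l (Rmax (Lm * T0) Tk) (Rmax (TM / ka) (TF / ka))).
  pose proof (Rmax_r (Rmax (Lm * T0) Tk) (Rmax (TM / ka) (TF / ka))).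
  pose proof (Rmax_l (Lm * T0) Tk). pose proof (Rmax_r (Lm * T0) Tk).
  pose proof (Rmax_l (TM / ka) (TF / ka)). pose proof (Rmax_r (TM / ka) (TF / ka)).
  assert (HrT0 : r > Lm * T0) by lra.
  assert (Hr0 : r > 0) by nra.
  assert (HkrM : ka * r > TM).
  { assert (HH : r > TM / ka) by lra. apply (Rmult_lt_reg_r (/ ka)). apply Rinv_0_lt_compat; lra.
    replace (ka * r * / ka) with r by (field; lra). exact HH. }
  assert (HkrF : ka * r > TF).
  { assert (HH : r > TF / ka) by lra. apply (Rmult_lt_reg_r (/ ka)). apply Rinv_0_lt_compat; lra.
    replace (ka * r * / ka) with r by (field; lra). exact HH. }
  apply Rnot_lt_le. intro Hgt.
  set (h := fun s => (1 + a) * g s + (-1) * f (x s)).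
  assert (Hgr0 : g r > 0) by (apply Hgp; lra).
  assert (Hhr : h r < 0) by (unfold h, a; cbv beta; nra).
  assert (HT0r : T0 < r) by nra.
  destruct (last_time h T0 r HT0r) as [q [Hq1 [Hq2 Hq3]]]; auto.
  { intros s Hs. apply hcont; auto. lra. }
  destruct (MVT_cor2 x (fun s => - f (x s) + g s) q r ltac:(lra)) as [c [Hc1 Hc2]].
  { intros c Hc. apply Hxd. lra. }
  assert (Hhc := Hq3 c ltac:(lra)). unfold h in Hhc; cbv beta in Hhc.
  assert (Hgc0 : g c > 0) by (apply Hgp; lra).
  assert (Hxrq : x r < x q).
  { assert (- f (x c) + g c < 0) by (unfold a in Hhc; nra).
    assert ((- f (x c) + g c) * (r - q) < 0) by (apply Rmult_neg_pos; lra). lra. }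
  assert (Hxq : Rabs (x q - 0) < Rmin etaf 1) by (apply HTx; lra).
  rewrite Rminus_0_r in Hxq. apply abs_lt_b in Hxq.
  assert (Hxr : x r > 0) by (apply Hxp; lra).
  assert (Hxq0 : x q > 0) by (apply Hxp; lra).
  destruct (MVT_cor2 (comp F x) (fun s => - / f (x s) * (- f (x s) + g s)) q r ltac:(lra)) as [c' [Hd1 Hd2]].
  { intros s Hs. apply derivable_pt_lim_comp. apply Hxd. lra. apply HFd. apply Hxp. lra. }
  assert (Hhc' := Hq3 c' ltac:(lra)). unfold h in Hhc'; cbv beta in Hhc'.
  assert (Hgc' : g c' > 0) by (apply Hgp; lra).
  assert (Hxc' : x c' > 0) by (apply Hxp; lra).
  assert (Hfc' : f (x c') > 0) by (apply Hfp; lra).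
  assert (Hder : - / f (x c') * (- f (x c') + g c') > c0).
  { replace (- / f (x c') * (- f (x c') + g c')) with ((f (x c') - g c') / f (x c')) by (field; lra).
    apply (Rmult_lt_reg_r (f (x c'))). auto.
    replace ((f (x c') - g c') / f (x c') * f (x c')) with (f (x c') - g c') by (field; lra).
    unfold c0. apply (Rmult_lt_reg_r (1 + a)). unfold a; lra.
    replace (a / (1 + a) * f (x c') * (1 + a)) with (a * f (x c')) by (field; unfold a; lra).
    nra. }
  unfold comp in Hd1.
  assert (HFq : F (x q) >= 0).
  { destruct (Req_dec (x q) 1) as [E|E]. rewrite E, HF1. lra.
    assert (F 1 < F (x q)) by (apply (F_decr f F Hfp HFd); lra). lra. }
  assert (HFr1 : F (x r) >= c0 * (r - q)).
  { assert (- / f (x c') * (- f (x c') + g c') * (r - q) >= c0 * (r - q)) by (apply Rle_ge, Rmult_le_compat_r; lra). lra. }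
  assert (Hrq : r - q >= (1 - / Lm) * r).
  { destruct Hq2 as [Hq2|Hq2].
    - destruct (Rle_dec (Lm * q) r) as [L|L].
      + assert (q <= r * / Lm).
        { apply (Rmult_le_reg_r Lm). lra. replace (r * / Lm * Lm) with r by (field; lra). lra. }
        lra.
      + exfalso. apply Rnot_le_lt in L. unfold h in Hq2; cbv beta in Hq2.
        assert (Hgq : g q > 0) by (apply Hgp; lra).
        assert (A1 := Hnmf (x r) (x q) ltac:(lra) ltac:(lra)).
        assert (A2 := Hnmg r (Lm * q) ltac:(lra)).
        assert (A3 := HTL q ltac:(lra)). apply abs_lt_b in A3.
        assert (A4 : g (Lm * q) > (1 - e/8) * g q).
        { replace (g (Lm * q)) with (g (Lm * q) / g q * g q) by (field; lra). nra. }
        pose proof (poly1 e He).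
        assert (B1 : f (x r) <= (1 + e/16) * ((1 + e/8) * g q)) by (unfold a in Hq2; nra).
        assert (B2 : (1 + e/2) * g r < (1 + e/16) * ((1 + e/8) * g q)) by lra.
        assert (B3 : (1 - e/8) * g q < (1 + e/16) * g r) by lra.
        assert (B4 : (1 + e/2) * ((1 - e/8) * g q) < (1 + e/2) * ((1 + e/16) * g r)) by (apply Rmult_lt_compat_l; lra).
        assert (B5 : (1 + e/16) * ((1 + e/2) * g r) < (1 + e/16) * ((1 + e/16) * ((1 + e/8) * g q))) by (apply Rmult_lt_compat_l; lra).
        nra.
    - subst q. assert (T0 < r * / Lm).
      { apply (Rmult_lt_reg_r Lm). lra. replace (r * / Lm * Lm) with r by (field; lra). lra. }
      lra. }
  assert (HFr : F (x r) >= ka * r).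
  { unfold ka. assert (c0 * (r - q) >= c0 * ((1 - / Lm) * r)) by (apply Rle_ge, Rmult_le_compat_l; lra). lra. }
  destruct (HFi (ka * r) ltac:(nra)) as [Hfi1 Hfi2].
  assert (Hxfi : x r <= Finv (ka * r)).
  { apply Rnot_lt_le. intro Hl. assert (F (x r) < F (Finv (ka * r))) by (apply (F_decr f F Hfp HFd); lra). lra. }
  assert (HFs := HTF (ka * r) HkrF).
  assert (C1 := Hnmf (x r) (Finv (ka * r)) ltac:(lra) HFs).
  assert (C2 := HTM (ka * r) HkrM).
  assert (Hffi : f (Finv (ka * r)) > 0) by (apply Hfp; lra).
  assert (C3 : g (ka * r) > M * f (Finv (ka * r))).
  { apply (Rmult_lt_reg_r (/ f (Finv (ka * r)))). apply Rinv_0_lt_compat; lra.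
    replace (M * f (Finv (ka * r)) * / f (Finv (ka * r))) with M by (field; lra). exact C2. }
  assert (C4 := HTk r ltac:(lra)). apply abs_lt_b in C4.
  assert (C5 : g (ka * r) < K * g r).
  { replace (g (ka * r)) with (g (ka * r) / g r * g r) by (field; lra). unfold K. nra. }
  assert (C6 : 4 * K * f (Finv (ka * r)) < K * g r) by (unfold M in C3; lra).
  assert (C7 : f (Finv (ka * r)) < g r / 4).
  { apply (Rmult_lt_reg_l (4 * K)). lra. replace (4 * K * (g r / 4)) with (K * g r) by field. lra. }
  nra.
Qed.


Lemma main_conv (f g x F Finv : R -> R) (theta : R) :
  continuity f -> (forall u, u > 0 -> f u > 0) -> (forall t, t > 0 -> g t > 0) ->
  (forall s, s > 0 -> continuity_pt g s) -> (forall t, 0 <= t -> x t > 0) ->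
  (forall t, t > 0 -> derivable_pt_lim x t (- f (x t) + g t)) ->
  lim_infty x 0 ->
  F 1 = 0 ->
  (forall u, u > 0 -> derivable_pt_lim F u (- / f u)) ->
  (forall t, t > 0 -> Finv t > 0 /\ F (Finv t) = t) ->
  lim_infty_pinf (fun t => g t / f (Finv t)) ->
  theta >= 0 ->
  (forall l, l > 0 -> lim_infty (fun t => g (l * t) / g t) (Rpower l (- theta))) ->
  (forall eps, eps > 0 -> exists eta, eta > 0 /\ forall v u, 0 < v <= u -> u < eta -> f v <= (1 + eps) * f u) ->
  (forall eps, eps > 0 -> exists T, forall t s, T < t <= s -> g s <= (1 + eps) * g t) ->
  lim_infty (fun t => f (x t) / g t) 1.
Proof.
  intros Hfc Hfp Hgp Hgc Hxp Hxd Hxl HF1 HFd HFi Hgr Hth Hrv NMf NMg eps Heps.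
  set (e := Rmin eps (1/2)).
  assert (He : 0 < e <= 1/2). { unfold e. split. apply Rmin_pos; lra. apply Rmin_r. }
  assert (He2 : e <= eps) by apply Rmin_l.
  destruct (lower_bound f g x Hfc Hfp Hgp Hgc Hxp Hxd Hxl NMf NMg e He) as [T1 H1].
  destruct (upper_bound f g x F Finv theta Hfc Hfp Hgp Hgc Hxp Hxd Hxl HF1 HFd HFi Hgr Hth Hrv NMf NMg e He) as [T2 H2].
  exists (Rmax (Rmax T1 T2) 0). intros t Ht.
  pose proof (Rmax_l (Rmax T1 T2) 0). pose proof (Rmax_r (Rmax T1 T2) 0).
  pose proof (Rmax_l T1 T2). pose proof (Rmax_r T1 T2).
  specialize (H1 t ltac:(lra)). specialize (H2 t ltac:(lra)).
  assert (Hg : g t > 0) by (apply Hgp; lra).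
  apply abs_lt_i.
  replace (f (x t) / g t - 1) with ((f (x t) - g t) / g t) by (field; lra).
  split.
  - apply (Rmult_lt_reg_r (g t)). auto. replace ((f (x t) - g t) / g t * g t) with (f (x t) - g t) by (field; lra). nra.
  - apply (Rmult_lt_reg_r (g t)). auto. replace ((f (x t) - g t) / g t * g t) with (f (x t) - g t) by (field; lra). nra.
Qed.

Lemma Rpower_inv_neg : forall l th, l > 0 -> Rpower (/ l) (- th) = Rpower l th.
Proof. intros l th Hl. unfold Rpower. rewrite ln_Rinv by lra. f_equal. ring. Qed.

Lemma NMg_i (g : R -> R) (theta : R) : theta > 0 ->
  (forall t, t > 0 -> g t > 0) ->
  (forall s, s > 0 -> continuity_pt g s) ->
  (forall l, l > 0 -> lim_infty (fun t => g (l * t) / g t) (Rpower l (- theta))) ->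
  forall eps, eps > 0 -> exists T, forall t s, T < t <= s -> g s <= (1 + eps) * g t.
Proof.
  intros Hth Hgp Hgc Hrv eps Heps.
  destruct (near_mono (fun u => g (/ u)) theta Hth) with (eps := eps) as [eta [Heta Hnm]]; auto.
  - intros u Hu. apply Hgp. apply Rinv_0_lt_compat; lra.
  - intros u Hu. apply (continuity_pt_comp (fun u => / u) g u).
    apply (continuity_pt_inv (fun u => u) u). apply derivable_continuous_pt, derivable_pt_id. lra.
    apply Hgc. apply Rinv_0_lt_compat; lra.
  - intros l Hl e He. destruct (Hrv (/ l) ltac:(apply Rinv_0_lt_compat; lra) e He) as [T HT].
    exists (/ Rmax T 1). pose proof (Rmax_l T 1). pose proof (Rmax_r T 1).
    split. apply Rinv_0_lt_compat; lra.
    intros u Hu. rewrite <- Rpower_inv_neg by lra.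
    assert (Hut : / u > Rmax T 1).
    { assert (/ Rmax T 1 > 0) by (apply Rinv_0_lt_compat; lra).
      rewrite <- (Rinv_inv (Rmax T 1)). apply Rinv_lt_contravar. apply Rmult_lt_0_compat; lra. lra. }
    rewrite Rinv_mult. apply HT. lra.
  - exists (/ eta). intros t s Hts.
    assert (Ht : t > 0). { assert (/ eta > 0) by (apply Rinv_0_lt_compat; lra). lra. }
    specialize (Hnm (/ s) (/ t)). rewrite !Rinv_inv in Hnm. apply Hnm.
    split. apply Rinv_0_lt_compat; lra. apply Rinv_le_contravar; lra.
    rewrite <- (Rinv_inv eta). apply Rinv_lt_contravar. apply Rmult_lt_0_compat. apply Rinv_0_lt_compat; lra. lra. lra.
Qed.

Lemma NMg_ii (g gamma1 : R -> R) :
  (forall t, t > 0 -> g t > 0) ->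
  (forall s t : R, 0 < s -> s <= t -> gamma1 t <= gamma1 s) ->
  lim_infty (fun t => g t / gamma1 t) 1 ->
  forall eps, eps > 0 -> exists T, forall t s, T < t <= s -> g s <= (1 + eps) * g t.
Proof.
  intros Hgp Hmon Hlim eps Heps.
  set (e := Rmin eps 1 / 4).
  assert (He : 0 < e <= 1/4). { unfold e. pose proof (Rmin_r eps 1). assert (Rmin eps 1 > 0) by (apply Rmin_pos; lra). lra. }
  assert (He2 : e <= eps / 4) by (unfold e; pose proof (Rmin_l eps 1); lra).
  destruct (Hlim e ltac:(lra)) as [T HT].
  assert (Hpos : forall t, t > Rmax T 0 -> gamma1 t > 0 /\ (1 - e) * gamma1 t < g t < (1 + e) * gamma1 t).
  { intros t Ht. pose proof (Rmax_l T 0). pose proof (Rmax_r T 0).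
    specialize (HT t ltac:(lra)). apply abs_lt_b in HT.
    assert (Hg : g t > 0) by (apply Hgp; lra).
    assert (Hgm : gamma1 t > 0).
    { apply Rnot_le_gt. intro Hle. destruct (Req_dec (gamma1 t) 0) as [E|E].
      - rewrite E in HT. unfold Rdiv in HT. rewrite Rinv_0, Rmult_0_r in HT. lra.
      - assert (g t / gamma1 t < 0). { unfold Rdiv. apply Rmult_pos_neg. lra. apply Rinv_lt_0_compat. lra. } lra. }
    split; auto.
    replace (g t) with (g t / gamma1 t * gamma1 t) by (field; lra). split; nra. }
  exists (Rmax T 0). intros t s Hts.
  destruct (Hpos t ltac:(lra)) as [A1 [A2 A3]]. destruct (Hpos s ltac:(lra)) as [B1 [B2 B3]].
  assert (Hm : gamma1 s <= gamma1 t) by (apply Hmon; pose proof (Rmax_r T 0); lra).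
  assert (C0 : 1 + e <= (1 + eps) * (1 - e)).
  { assert (eps * e <= eps * (1/4)) by (apply Rmult_le_compat_l; lra). nra. }
  assert (C : (1 + e) * gamma1 t <= (1 + eps) * ((1 - e) * gamma1 t)).
  { rewrite <- Rmult_assoc. apply Rmult_le_compat_r; lra. }
  assert (D1 : (1 + e) * gamma1 s <= (1 + e) * gamma1 t) by (apply Rmult_le_compat_l; lra).
  assert (D2 : (1 + eps) * ((1 - e) * gamma1 t) <= (1 + eps) * g t) by (apply Rmult_le_compat_l; lra).
  lra.
Qed.

Theorem theorem4
  (f g : R -> R) (xi : R) (F Finv : R -> R) (x : R -> R) (beta theta : R)
  (* standing assumptions on f *)
  (Hf_cont : continuity f)
  (Hf_lip : locally_lipschitz f)
  (Hf0 : f 0 = 0)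
  (Hf_sign : forall u : R, u <> 0 -> u * f u > 0)
  (* standing assumptions on g and xi *)
  (Hg_cont : continuous_on_nonneg g)
  (Hg_pos : forall t : R, t > 0 -> g t > 0)
  (Hxi : xi > 0)
  (* F(u) = int_u^1 dv / f(v) for u > 0 *)
  (HF1 : F 1 = 0)
  (HF_deriv : forall u : R, u > 0 -> derivable_pt_lim F u (- / f u))
  (HF_inf : lim_0plus_pinf F)
  (* F^{-1}: inverse of F on its range, which contains (0, +oo) *)
  (HFinv : forall t : R, t > 0 -> Finv t > 0 /\ F (Finv t) = t)
  (* x solves x' = -f(x) + g, x(0) = xi, continuous on [0,oo) *)
  (Hx_cont : continuous_on_nonneg x)
  (Hx0 : x 0 = xi)
  (Hx_ode : forall t : R, t > 0 -> derivable_pt_lim x t (- f (x t) + g t))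
  (* hypotheses of the theorem *)
  (Hgrowth : lim_infty_pinf (fun t => g t / f (Finv t)))
  (Hbeta : beta > 1)
  (HfRV : RV0 f beta)
  (Htheta : theta >= 0)
  (HgRV : RVinf g (- theta))
  (Hx_lim : lim_infty x 0) :
  (theta > 0 -> lim_infty (fun t => f (x t) / g t) 1) /\
  (theta = 0 ->
     (exists gamma1 : R -> R,
        (forall s t : R, 0 < s -> s <= t -> gamma1 t <= gamma1 s) /\
        lim_infty (fun t => g t / gamma1 t) 1) ->
     lim_infty (fun t => f (x t) / g t) 1).
Proof.
  assert (Hfp : forall u, u > 0 -> f u > 0).
  { intros u Hu. specialize (Hf_sign u ltac:(lra)). nra. }
  destruct HfRV as [_ Hfrv]. destruct HgRV as [_ Hgrv].
  assert (NMf := near_mono f beta ltac:(lra) Hfp (fun u _ => Hf_cont u) Hfrv).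
  assert (Hxp := x_pos f g x xi Hf0 Hg_pos Hxi Hx_cont Hx0 Hx_ode).
  assert (Hgc := g_cpt g Hg_cont).
  split.
  - intro Hth. apply (main_conv f g x F Finv theta); auto.
    apply (NMg_i g theta); auto.
  - intros Hth [gamma1 [Hm Hl]]. apply (main_conv f g x F Finv theta); auto.
    apply (NMg_ii g gamma1); auto.
Qed.
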